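(* Each of the eleven sets $A,B,C,D,E,F,G,H,I,J,K$ is uncountable.
   Context: $\Sigma=\{0,1\}$. An overlap is a word $axaxa$ with $a\in\Sigma$, $x\in\Sigma^*$; a word is overlap-free if it has no overlap as a factor. $\mathcal{O}$ is the set of right-infinite binary overlap-free words. Subsets of $\Sigma^\omega$: $A=\mathcal{O}$; $B=\{\mathbf{x}: 1\mathbf{x}\in\mathcal{O}\}$; $C=\{\mathbf{x}: 1\mathbf{x}\in\mathcal{O}$ and $\mathbf{x}$ begins with $101\}$; $D=\{\mathbf{x}: 0\mathbf{x}\in\mathcal{O}\}$; $E=\{\mathbf{x}: 0\mathbf{x}\in\mathcal{O}$ and $\mathbf{x}$ begins with $010\}$; $F=\{\mathbf{x}: 0\mathbf{x}\in\mathcal{O}$ and $\mathbf{x}$ begins with $11\}$; $G=\{\mathbf{x}: 0\mathbf{x}\in\mathcal{O}$ and $\mathbf{x}$ begins with $1\}$; $H=\{\mathbf{x}: 1\mathbf{x}\in\mathcal{O}$ and $\mathbf{x}$ begins with $1\}$; $I=\{\mathbf{x}: 1\mathbf{x}\in\mathcal{O}$ and $\mathbf{x}$ begins with $00\}$; $J=\{\mathbf{x}: 1\mathbf{x}\in\mathcal{O}$ and $\mathbf{x}$ begins with $0\}$; $K=\{\mathbf{x}: 0\mathbf{x}\in\mathcal{O}$ and $\mathbf{x}$ begins with $0\}$. *)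

(* Defs.v *)
From mathcomp Require Import all_boot.
Set Implicit Arguments. Unset Strict Implicit. Unset Printing Implicit Defensive.

(* Alphabet Sigma = {0,1} is encoded by bool: 0 = false, 1 = true. *)
Definition iword := nat -> bool.

Definition scons (a : bool) (x : iword) : iword :=
  fun n => if n is n'.+1 then x n' else a.

Definition overlap (u : seq bool) : Prop :=
  exists (a : bool) (x : seq bool), u = a :: x ++ a :: x ++ [:: a].

Definition ifactor (w : iword) (i n : nat) : seq bool := mkseq (fun k => w (i + k)) n.

Definition overlap_free (w : iword) : Prop :=
  forall i n, ~ overlap (ifactor w i n).

Definition begins_with (p : seq bool) (x : iword) : Prop :=
  forall k, k < size p -> x k = nth false p k.

Definition ofw_setO (x : iword) : Prop := overlap_free x.

Definition ofw_setA (x : iword) : Prop := ofw_setO x.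
Definition ofw_setB (x : iword) : Prop := ofw_setO (scons true x).
Definition ofw_setC (x : iword) : Prop := ofw_setO (scons true x) /\ begins_with [:: true; false; true] x.
Definition ofw_setD (x : iword) : Prop := ofw_setO (scons false x).
Definition ofw_setE (x : iword) : Prop := ofw_setO (scons false x) /\ begins_with [:: false; true; false] x.
Definition ofw_setF (x : iword) : Prop := ofw_setO (scons false x) /\ begins_with [:: true; true] x.
Definition ofw_setG (x : iword) : Prop := ofw_setO (scons false x) /\ begins_with [:: true] x.
Definition ofw_setH (x : iword) : Prop := ofw_setO (scons true x) /\ begins_with [:: true] x.
Definition ofw_setI (x : iword) : Prop := ofw_setO (scons true x) /\ begins_with [:: false; false] x.
Definition ofw_setJ (x : iword) : Prop := ofw_setO (scons true x) /\ begins_with [:: false] x.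
Definition ofw_setK (x : iword) : Prop := ofw_setO (scons false x) /\ begins_with [:: false] x.

Definition countable_set (S : iword -> Prop) : Prop :=
  exists f : iword -> nat, forall x y, S x -> S y -> f x = f y -> x = y.

Definition uncountable (S : iword -> Prop) : Prop := ~ countable_set S.

(* Main.v *)
Require Import Defs.
From mathcomp Require Import all_boot.
From Stdlib Require Import Lia ClassicalEpsilon.
Set Implicit Arguments. Unset Strict Implicit. Unset Printing Implicit Defensive.

Ltac nlia := repeat match goal with H: is_true (_ <= _) |- _ => move/leP: H => H end;
  try apply/leP; change addn with Nat.add in *; change muln with Nat.mul in *;
  change subn with Nat.sub in *; lia.

Definition mu (x : iword) : iword := fun n => addb (x n./2) (odd n).

Definition ovl (w : iword) (i p : nat) : Prop :=
  0 < p /\ forall k, k <= p -> w (i + k) = w (i + k + p).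

Lemma muE0 x j : mu x (2 * j) = x j.
Proof. by rewrite /mu mul2n doubleK odd_double addbF. Qed.

Lemma muE1 x j : mu x (2 * j + 1) = ~~ x j.
Proof. by rewrite /mu mul2n addn1 /= uphalf_double odd_double addbT. Qed.

Lemma mue x n j : n = 2 * j -> mu x n = x j.
Proof. by move=> ->; apply: muE0. Qed.

Lemma muo x n j : n = 2 * j + 1 -> mu x n = ~~ x j.
Proof. by move=> ->; apply: muE1. Qed.

Lemma parity n : exists j, n = 2 * j \/ n = 2 * j + 1.
Proof.
exists n./2; have := odd_double_half n; rewrite -mul2n.
case: (odd n) => /= E; [right|left]; nlia.
Qed.

Lemma half_bounds n : 2 * n./2 <= n /\ n <= 2 * n./2 + 1.
Proof.
have := odd_double_half n; rewrite -mul2n; case: (odd n) => /= E; split; nlia.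
Qed.

Lemma ovl_of_overlap w i n : overlap (ifactor w i n) -> exists p, ovl w i p.
Proof.
move=> [a [x Hu]].
have Hs : size (ifactor w i n) = n by rewrite size_mkseq.
have Hn : n = 2 * (size x).+1 + 1.
  by rewrite -Hs Hu /= size_cat /= size_cat /=; nlia.
exists (size x).+1; split => // k Hk.
have E1 : w (i + k) = nth false (ifactor w i n) k by rewrite nth_mkseq //; nlia.
have E2 : w (i + k + (size x).+1) = nth false (ifactor w i n) (k + (size x).+1).
  by rewrite nth_mkseq ?addnA //; nlia.
rewrite E1 E2 Hu.
change (nth false ((a :: x) ++ ((a :: x) ++ [:: a])) k =
  nth false ((a :: x) ++ ((a :: x) ++ [:: a])) (k + (size (a :: x)))).
set v := a :: x.
have Hk' : k <= size v by [].
rewrite [LHS]nth_cat [RHS]nth_cat.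
have -> : (k + size v < size v) = false by apply/negbTE; rewrite -leqNgt leq_addl.
rewrite addnK.
case: ltnP => Hk2.
  by rewrite nth_cat Hk2.
have -> : k = size v by apply/eqP; rewrite eqn_leq Hk' Hk2.
by rewrite subnn !nth_cat ltnn subnn /=; rewrite /v /=.
Qed.

Lemma ofree_of (w : iword) : (forall i p, ~ ovl w i p) -> overlap_free w.
Proof. by move=> H i n /ovl_of_overlap [p Hp]; apply: (H i p). Qed.

Lemma ovl_ext x y i p : (forall n, x n = y n) -> ovl x i p -> ovl y i p.
Proof. by move=> E [H1 H2]; split => // k Hk; rewrite -!E H2. Qed.

Lemma ovl_agree x y i p : (forall n, n <= i + 2 * p -> x n = y n) -> ovl x i p -> ovl y i p.
Proof.
move=> E [H1 H2]; split => // k Hk; rewrite -!E ?H2 //; nlia.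
Qed.

Lemma ovl_drop y d i p : ovl (fun n => y (n + d)) i p -> ovl y (i + d) p.
Proof.
move=> [H1 H2]; split => // k Hk; have := H2 k Hk.
have -> : i + k + d = i + d + k by nlia.
by have -> : i + k + p + d = i + d + k + p by nlia.
Qed.

Lemma neg_cases (b c : bool) : b = ~~ c -> c = ~~ b.
Proof. by case: b; case: c. Qed.

Lemma ovl_mu_odd x i p m : ovl (mu x) i p -> odd p -> 3 <= p ->
  i <= 2 * m + 1 -> 2 * m + 1 <= i + 3 -> x m != x (m + 1) -> False.
Proof.
move=> [H0 Hp] Hodd H3 Hm1 Hm2 Hx.
have [q Hq] := parity p.
have Hq' : p = 2 * q + 1.
  case: Hq => // Eq; move: Hodd; rewrite Eq mul2n odd_double //.
case: (leqP (2 * m + 1 - i).+1 p) => Hc.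
- set c := 2 * m + 1 - i.
  have A := Hp c (ltnW Hc).
  have B := Hp c.+1 Hc.
  have e1 : mu x (i + c) = ~~ x m by apply: muo; rewrite /c; nlia.
  have e2 : mu x (i + c + p) = x (m + q + 1) by apply: mue; rewrite /c; nlia.
  have e3 : mu x (i + c.+1) = x (m + 1) by apply: mue; rewrite /c; nlia.
  have e4 : mu x (i + c.+1 + p) = ~~ x (m + q + 1) by apply: muo; rewrite /c; nlia.
  rewrite e1 e2 in A; rewrite e3 e4 in B.
  move: Hx; rewrite B -A; by case: (x m).
- have Hp3 : p = 3 by nlia.
  have A := Hp 0 isT.
  have B := Hp 1 ltac:(nlia).
  have e1 : mu x (i + 0) = x (m - 1) by apply: mue; nlia.
  have e2 : mu x (i + 0 + p) = ~~ x m by apply: muo; nlia.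
  have e3 : mu x (i + 1) = ~~ x (m - 1) by apply: muo; nlia.
  have e4 : mu x (i + 1 + p) = x (m + 1) by apply: mue; nlia.
  rewrite e1 e2 in A; rewrite e3 e4 in B.
  move: Hx; rewrite -B A; by case: (x m).
Qed.

Lemma ovl_mu x i p : ovl (mu x) i p -> exists j q, q < p /\ ovl x j q.
Proof.
move=> Hov; have [H0 Hp] := Hov.
have [q Hq] := parity p; have [j Hj] := parity i.
case: Hq => Ep.
- exists j, q; split; first nlia.
  split; first nlia.
  move=> k Hk; have A := Hp (2 * k) ltac:(nlia).
  case: Hj => Ei.
  + rewrite (@mue x (i + 2 * k) (j + k)) in A; last nlia.
    by rewrite (@mue x (i + 2 * k + p) (j + k + q)) in A; last nlia.
  + rewrite (@muo x (i + 2 * k) (j + k)) in A; last nlia.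
    rewrite (@muo x (i + 2 * k + p) (j + k + q)) in A; last nlia.
    by move: A; case: (x _); case: (x _).
- case: (posnP q) => Hq0.
  + exfalso; case: Hj => Ei.
    * have A := Hp 0 isT.
      rewrite (@mue x (i + 0) j) in A; last nlia.
      rewrite (@muo x (i + 0 + p) j) in A; last nlia.
      by move: A; case: (x j).
    * have A := Hp 1 ltac:(nlia).
      rewrite (@mue x (i + 1) (j + 1)) in A; last nlia.
      rewrite (@muo x (i + 1 + p) (j + 1)) in A; last nlia.
      by move: A; case: (x _).
  + have Hodd : odd p by rewrite Ep mul2n addn1 /= odd_double.
    have H3 : 3 <= p by nlia.
    case E1: (x j == x (j + 1)); last first.
      exfalso; apply: (@ovl_mu_odd x i p j Hov Hodd H3); try nlia.
      by rewrite E1.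
    case E2: (x (j + 1) == x (j + 1 + 1)); last first.
      exfalso; apply: (@ovl_mu_odd x i p (j + 1) Hov Hodd H3); try nlia.
      by rewrite E2.
    exists j, 1; split; first nlia.
    split => // k; case: k => [|[|k]] // _.
      by rewrite addn0 (eqP E1).
    by rewrite (eqP E2).
Qed.

Definition mu3 (x : iword) : iword := mu (mu (mu x)).
Definition g0 (x : iword) : iword := mu3 x.
Definition g1 (x : iword) : iword := fun n => mu3 x (n + 3).
Definition gb (b : bool) : iword -> iword := if b then g1 else g0.

Fixpoint comp (s : nat -> bool) (K : nat) (z : iword) : iword :=
  match K with
  | 0 => z
  | K'.+1 => gb (s 0) (comp (fun i => s i.+1) K' z)
  end.

Lemma ovl_mu3 x i p : ovl (mu3 x) i p -> exists j q, q < p /\ ovl x j q.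
Proof.
move/ovl_mu => [j1 [q1 [h1 /ovl_mu [j2 [q2 [h2 /ovl_mu [j3 [q3 [h3 H]]]]]]]]].
exists j3, q3; split => //; nlia.
Qed.

Lemma ovl_gb b x i p : ovl (gb b x) i p -> exists j q, q < p /\ ovl x j q.
Proof.
case: b => /=; last exact: ovl_mu3.
by move/ovl_drop/ovl_mu3.
Qed.

Lemma ovl_comp K : forall s z i p, ovl (comp s K z) i p -> exists j q, q + K <= p /\ ovl z j q.
Proof.
elim: K => [|K IH] s z i p /=.
  by move=> H; exists i, p; rewrite addn0.
move/ovl_gb => [j [q [hq /IH [j' [q' [hq' H]]]]]].
exists j', q'; split => //; nlia.
Qed.

Lemma mu_dep x y N : (forall m, m <= N -> x m = y m) -> forall n, n./2 <= N -> mu x n = mu y n.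
Proof. by move=> H n hn; rewrite /mu H. Qed.

Lemma mu3_dep x y N : (forall m, m <= N -> x m = y m) ->
  forall n, n./2./2./2 <= N -> mu3 x n = mu3 y n.
Proof.
move=> H n hn; apply: (@mu_dep _ _ n./2) => // m hm.
apply: (@mu_dep _ _ n./2./2); last by apply: half_leq.
move=> m' hm'.
apply: (@mu_dep _ _ n./2./2./2); last by apply: half_leq.
by move=> m'' hm''; apply: H; apply: leq_trans hn.
Qed.

Lemma gb_dep b x y N : (forall m, m <= N -> x m = y m) ->
  forall n, n <= N.+1 -> gb b x n = gb b y n.
Proof.
move=> H n hn; case: b => /=; apply: (mu3_dep H).
- have [a1 a2] := half_bounds (n + 3).
  have [b1 b2] := half_bounds (n + 3)./2.
  have [c1 c2] := half_bounds (n + 3)./2./2.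
  nlia.
- have [a1 a2] := half_bounds n.
  have [b1 b2] := half_bounds n./2.
  have [c1 c2] := half_bounds n./2./2.
  nlia.
Qed.

Lemma gb0 b x : gb b x 0 = x 0.
Proof. by case: b; rewrite /gb /g0 /g1 /mu3 /mu /=; case: (x 0). Qed.

Lemma comp_first s K z : z 0 = false -> comp s K z 0 = false.
Proof. by elim: K s => [|K IH] s //= hz; rewrite gb0 IH. Qed.

Lemma comp_stab K : forall s z z' L n, z 0 = false -> z' 0 = false -> n <= K ->
  comp s K z n = comp s (K + L) z' n.
Proof.
elim: K => [|K IH] s z z' L n hz hz' hn.
  by move: hn; rewrite leqn0 => /eqP ->; rewrite /= hz add0n comp_first.
rewrite addSn /=; apply: (@gb_dep _ _ _ K) => // m hm.
by apply: IH.
Qed.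

Definition zf : iword := fun _ => false.
Definition W (s : nat -> bool) : iword := fun n => comp s n.+1 zf n.

Lemma W_stab s n K : n < K -> W s n = comp s K zf n.
Proof.
move=> h; rewrite /W (@comp_stab n.+1 s zf zf (K - n.+1)) //.
by rewrite subnKC.
Qed.

Lemma W0 s : W s 0 = false.
Proof. by rewrite /W comp_first. Qed.

Lemma W_ovlfree s i p : ~ ovl (W s) i p.
Proof.
move=> H.
have H' : ovl (comp s (i + 2 * p + 1) zf) i p.
  apply: (ovl_agree _ H) => n hn; apply: W_stab; nlia.
have [j [q [hq _]]] := ovl_comp H'.
move: H => [hp _]; nlia.
Qed.

Lemma W_unfold s n : W s n = gb (s 0) (W (fun i => s i.+1)) n.
Proof.
rewrite (@W_stab s n n.+2) //=.
apply: (@gb_dep _ _ _ n) => // m hm.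
by rewrite (@W_stab _ m n.+1).
Qed.

Lemma gb2 b x : x 0 = false -> gb b x 2 = ~~ b.
Proof. by move=> h; case: b; rewrite /gb /g0 /g1 /mu3 /mu /= h. Qed.

Lemma mu3E x m : mu3 x (8 * m) = x m.
Proof.
rewrite /mu3 (@mue _ (8 * m) (4 * m)); last nlia.
rewrite (@mue _ (4 * m) (2 * m)); last nlia.
by rewrite muE0.
Qed.

Lemma gb_inj b x y : x 0 = y 0 -> (forall n, gb b x n = gb b y n) -> forall m, x m = y m.
Proof.
move=> h0 H m; case: b H => /= H.
- case: m => [|m] //.
  have := H (8 * m + 5); rewrite /g1.
  have -> : 8 * m + 5 + 3 = 8 * m.+1 by nlia.
  by rewrite !mu3E.
- by have := H (8 * m); rewrite /g0 !mu3E.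
Qed.

Lemma W_inj k : forall s s', (forall n, W s n = W s' n) -> s k = s' k.
Proof.
have base : forall s s', (forall n, W s n = W s' n) -> s 0 = s' 0.
  move=> s s' H; have := H 2; rewrite !W_unfold !gb2 ?W0 //.
  by case: (s 0); case: (s' 0).
elim: k => [|k IH] s s' H; first exact: base.
apply: (IH (fun i => s i.+1) (fun i => s' i.+1)).
apply: (@gb_inj (s 0)); first by rewrite !W0.
by move=> n; rewrite -W_unfold (base _ _ H) -W_unfold.
Qed.

Lemma uncount_of (S : iword -> Prop) (E : (nat -> bool) -> iword) :
  (forall s, S (E s)) -> (forall s s', E s = E s' -> forall k, s k = s' k) -> uncountable S.
Proof.
move=> HS Hinj [f Hf].
pose h s := f (E s).
pose pick k : nat -> bool := epsilon (inhabits (fun _ : nat => false)) (fun s => h s = k).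
pose d k := ~~ pick k k.
have e : h (pick (h d)) = h d by apply: (epsilon_spec (inhabits (fun _ : nat => false)) (fun s => h s = h d)); exists d.
have := Hinj _ _ (Hf _ _ (HS _) (HS _) e) (h d).
rewrite /d; by case: (pick (h d) (h d)).
Qed.

Definition mu4 (x : iword) : iword := mu (mu3 x).
Definition Ej (j : nat) (s : nat -> bool) : iword := fun n => mu4 (W s) (n + j).

Lemma mu4_ovlfree s i p : ~ ovl (mu4 (W s)) i p.
Proof.
move/ovl_mu => [j [q [_ /ovl_mu3 [j' [q' [_ H]]]]]].
exact: (W_ovlfree H).
Qed.

Lemma Ej_ok j a s : 0 < j -> mu4 (W s) j.-1 = a -> ofw_setO (scons a (Ej j s)).
Proof.
move=> hj ha; apply: ofree_of => i p H.
have H' : ovl (fun n => mu4 (W s) (n + j.-1)) i p.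
  apply: (ovl_ext _ H) => [[|n]] /=; first by rewrite add0n.
  rewrite /Ej; congr (mu4 _ _); nlia.
exact: (mu4_ovlfree (ovl_drop H')).
Qed.

Lemma mu4E x m : mu4 x (16 * m) = x m.
Proof.
by rewrite /mu4 (@mue _ (16 * m) (8 * m)) ?mu3E //; nlia.
Qed.

Lemma Ej_inj j s s' : j <= 16 -> Ej j s = Ej j s' -> forall k, s k = s' k.
Proof.
move=> hj H k; apply: W_inj => -[|m]; first by rewrite !W0.
have := f_equal (fun f => f (16 * m.+1 - j)) H; rewrite /Ej.
have -> : 16 * m.+1 - j + j = 16 * m.+1 by nlia.
by rewrite !mu4E.
Qed.

Lemma Ej_class j a (P : iword -> Prop) : 0 < j -> j <= 16 ->
  (forall s, mu4 (W s) j.-1 = a) -> (forall s, P (Ej j s)) ->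
  uncountable (fun x => ofw_setO (scons a x) /\ P x).
Proof.
move=> h1 h2 ha hP; apply: (@uncount_of _ (Ej j)).
  by move=> s; split; [apply: Ej_ok | apply: hP].
by move=> s s'; apply: Ej_inj.
Qed.

Lemma uncount_mono (S T : iword -> Prop) : uncountable S -> (forall x, S x -> T x) -> uncountable T.
Proof. by move=> HS HST [f Hf]; apply: HS; exists f => x y hx hy; apply: Hf; apply: HST. Qed.

Ltac letters := rewrite /Ej /mu4 /mu3 /mu /= ?W0.

Theorem corollary4 :
  uncountable ofw_setA /\ uncountable ofw_setB /\ uncountable ofw_setC /\ uncountable ofw_setD /\
  uncountable ofw_setE /\ uncountable ofw_setF /\ uncountable ofw_setG /\ uncountable ofw_setH /\
  uncountable ofw_setI /\ uncountable ofw_setJ /\ uncountable ofw_setK.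
Proof.
have hC : uncountable ofw_setC.
  apply: (uncount_mono (@Ej_class 2 true (begins_with [:: true; false; true]) _ _ _ _)) => //.
    by move=> s; letters.
  by move=> s [|[|[|k]]] //= _; letters.
have hE : uncountable ofw_setE.
  apply: (uncount_mono (@Ej_class 10 false (begins_with [:: false; true; false]) _ _ _ _)) => //.
    by move=> s; letters.
  by move=> s [|[|[|k]]] //= _; letters.
have hF : uncountable ofw_setF.
  apply: (uncount_mono (@Ej_class 1 false (begins_with [:: true; true]) _ _ _ _)) => //.
    by move=> s; letters.
  by move=> s [|[|k]] //= _; letters.
have hH : uncountable ofw_setH.
  apply: (uncount_mono (@Ej_class 2 true (begins_with [:: true]) _ _ _ _)) => //.
    by move=> s; letters.
  by move=> s [|k] //= _; letters.
have hI : uncountable ofw_setI.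
  apply: (uncount_mono (@Ej_class 5 true (begins_with [:: false; false]) _ _ _ _)) => //.
    by move=> s; letters.
  by move=> s [|[|k]] //= _; letters.
have hK : uncountable ofw_setK.
  apply: (uncount_mono (@Ej_class 6 false (begins_with [:: false]) _ _ _ _)) => //.
    by move=> s; letters.
  by move=> s [|k] //= _; letters.
split.
  apply: (@uncount_of _ W).
    by move=> s; apply: ofree_of => i p; apply: W_ovlfree.
  by move=> s s' H k; apply: W_inj => n; rewrite H.
split; first by apply: (uncount_mono hC) => x [].
split => //.
split; first by apply: (uncount_mono hE) => x [].
split => //.
split => //.
split; first by apply: (uncount_mono hF) => x [h1 h2]; split => // k; case: k => // _; apply: h2.
split => //.
split => //.
split; first by apply: (uncount_mono hI) => x [h1 h2]; split => // k; case: k => // _; apply: h2.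
done.
Qed.
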